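(* Consider the reaction network (BI) on the ten species $\mathrm{NE}_1,\mathrm{NI}_1,\mathrm{N}_1,\mathrm{D}_1,\mathrm{T}_1,\mathrm{NE}_2,\mathrm{NI}_2,\mathrm{N}_2,\mathrm{D}_2,\mathrm{T}_2$ with the six irreversible reactions \[ \begin{aligned} &11:\ \mathrm{NI}_1+\mathrm{NE}_1\to \mathrm{N}_1, && 21:\ \mathrm{NI}_2+\mathrm{NE}_2\to \mathrm{N}_2,\\ &12:\ \mathrm{N}_1+\mathrm{D}_2\to \mathrm{NI}_1+\mathrm{T}_2, && 22:\ \mathrm{N}_2+\mathrm{D}_1\to \mathrm{NI}_2+\mathrm{T}_1,\\ &13:\ \mathrm{T}_1\to \mathrm{NE}_1+\mathrm{D}_1, && 23:\ \mathrm{T}_2\to \mathrm{NE}_2+\mathrm{D}_2, \end{aligned} \] and its associated ODE system (writing $[X]$ for the concentration of species $X$) \[ \begin{cases} [\dot{\mathrm{NE}}_1]=-r_{11}([\mathrm{NI}_1],[\mathrm{NE}_1])+r_{13}([\mathrm{T}_1]),\\ [\dot{\mathrm{NI}}_1]=r_{12}([\mathrm{N}_1],[\mathrm{D}_2])-r_{11}([\mathrm{NI}_1],[\mathrm{NE}_1]),\\ [\dot{\mathrm{N}}_1]=-r_{12}([\mathrm{N}_1],[\mathrm{D}_2])+r_{11}([\mathrm{NI}_1],[\mathrm{NE}_1]),\\ [\dot{\mathrm{D}}_1]=r_{13}([\mathrm{T}_1])-r_{22}([\mathrm{N}_2],[\mathrm{D}_1]),\\ [\dot{\mathrm{T}}_1]=-r_{13}([\mathrm{T}_1])+r_{22}([\mathrm{N}_2],[\mathrm{D}_1]),\\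 [\dot{\mathrm{NE}}_2]=-r_{21}([\mathrm{NI}_2],[\mathrm{NE}_2])+r_{23}([\mathrm{T}_2]),\\ [\dot{\mathrm{NI}}_2]=r_{22}([\mathrm{N}_2],[\mathrm{D}_1])-r_{21}([\mathrm{NI}_2],[\mathrm{NE}_2]),\\ [\dot{\mathrm{N}}_2]=-r_{22}([\mathrm{N}_2],[\mathrm{D}_1])+r_{21}([\mathrm{NI}_2],[\mathrm{NE}_2]),\\ [\dot{\mathrm{D}}_2]=-r_{12}([\mathrm{N}_1],[\mathrm{D}_2])+r_{23}([\mathrm{T}_2]),\\ [\dot{\mathrm{T}}_2]=r_{12}([\mathrm{N}_1],[\mathrm{D}_2])-r_{23}([\mathrm{T}_2]). \end{cases} \] Then, for every choice of monotone chemical reaction rate functions $r_{11},r_{12},r_{13},r_{21},r_{22},r_{23}$ (whether or not the kinetic symmetry $r_{1k}\equiv r_{2k}$, $k=1,2,3$, is imposed), the system admits only one single positive steady state in each stoichiometric compatibility class. Moreover, the network (BI) is non-autocatalytic; in particular it possesses no unstable-positive feedback, and (BI) has no capacity for differentiation.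
   Context: General setting. A reaction network has species $X_1,\dots,X_M$ and irreversible reactions $j:\ \sum_m s^j_m X_m\to\sum_m \tilde s^j_m X_m$ with nonnegative stoichiometric coefficients; $X_m$ is a reactant of $j$ if $s^j_m>0$. The stoichiometric matrix is $S_{mj}=\tilde s^j_m-s^j_m$, and the ODE system is $\dot x=S\mathbf r(x)$, $x\in\mathbb R^M_{>0}$. A stoichiometric compatibility class is a set $(x_0+\operatorname{Im}S)\cap\mathbb R^M_{>0}$. A rate function $r_j$ is monotone chemical if (i) $r_j(x)\ge0$ for $x\in\mathbb R^M_{\ge0}$; (ii) $r_j(x)>0$ iff $x_m>0$ for all $m$ with $s^j_m>0$; (iii) $\partial r_j/\partial x_m\equiv0$ if $s^j_m=0$; (iv) $\partial r_j/\partial x_m>0$ for $x>0$ and $s^j_m>0$. Child-Selections: a $k$-Child-Selection (CS) triple $(\kappa,E_\kappa,J)$ consists of a set $\kappa$ of $k$ species, a set $E_\kappa$ of $k$ reactions and a bijection $J:\kappa\to E_\kappa$ such that each $X_m\in\kappa$ is a reactant of $J(X_m)$. Its CS-matrix is the $k\times k$ matrix $S[\kappa]$ with entries $S[\kappa]_{ml}=S_{m,J(X_l)}$ for $X_m,X_l\in\kappa$. An unstable-positive feedback is a $k\times k$ CS-matrix with $\operatorname{sign}\det S[\kappa]=(-1)^{k-1}$ such that no principal $k'\times k'$ submatrix with $k'<k$ has determinant of sign $(-1)^{k'-1}$. A network is autocatalytic if it has an unstable-positive feedback which is a Metzler matrix (all off-diagonal entries $\ge0$), and non-autocatalytic otherwise.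 Capacity for differentiation: let $R$ be the symbolic reactivity matrix ($|\mathbf E|\times M$, $R_{jm}=r_{jm}$ a positive symbol if $s^j_m>0$, else $0$; the symbols stand for the partial derivatives $\partial r_j/\partial x_m$ at a positive steady state, which can be prescribed arbitrarily for parameter-rich kinetics), $G=SR$ the symbolic Jacobian, $n=\dim\ker S^T$, and $a_{M-n}$ the coefficient of the characteristic polynomial of $G$ given by the sum of principal minors of order $M-n$ (which, for a nondegenerate network, is the determinant of the Jacobian restricted to a stoichiometric compatibility class). The two-cell network has the capacity for (zero-eigenvalue bifurcation and) differentiation if there are positive values of the symbols, satisfying kinetic symmetry at a homogeneous steady state (symbols of reactions/species related by swapping the cell indices $1\leftrightarrow2$ are equal), for which $a_{M-n}=0$. *)

(* Defs.v *)
From HB Require Import structures.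
From mathcomp Require Import all_boot all_order all_algebra.
From mathcomp Require Import all_classical all_reals all_analysis.
Set Implicit Arguments. Unset Strict Implicit. Unset Printing Implicit Defensive.
Import Order.TTheory GRing.Theory Num.Theory.
Local Open Scope ring_scope.

(* A network with M species and E reactions is given by the reactant
   coefficients s (s m j = s^j_m) and product coefficients st (st m j = s~^j_m). *)

Definition reactant (M E : nat) (s : 'M[nat]_(M, E)) (m : 'I_M) (j : 'I_E) : bool :=
  (0 < s m j)%N.

Definition stoich (R : nzRingType) (M E : nat) (s st : 'M[nat]_(M, E)) : 'M[R]_(M, E) :=
  \matrix_(m, j) ((st m j)%:R - (s m j)%:R).

Definition is_CS (M E : nat) (s : 'M[nat]_(M, E)) (k : nat)
    (kappa : 'I_k -> 'I_M) (J : 'I_k -> 'I_E) : Prop :=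
  [/\ (0 < k)%N, injective kappa, injective J &
      forall i, reactant s (kappa i) (J i)].

Definition CS_matrix (R : nzRingType) (M E k : nat) (S : 'M[R]_(M, E))
    (kappa : 'I_k -> 'I_M) (J : 'I_k -> 'I_E) : 'M[R]_k :=
  \matrix_(i, l) S (kappa i) (J l).

Definition principal_sub (R : Type) (k k' : nat) (f : 'I_k' -> 'I_k) (A : 'M[R]_k)
  : 'M[R]_k' := \matrix_(i, j) A (f i) (f j).

Definition unstable_positive_feedback (R : realDomainType) (k : nat) (A : 'M[R]_k)
  : Prop :=
  Num.sg (\det A) = (-1) ^+ k.-1 /\
  forall (k' : nat) (f : 'I_k' -> 'I_k), injective f -> (0 < k' < k)%N ->
    Num.sg (\det (principal_sub f A)) <> (-1) ^+ k'.-1.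

Definition Metzler (R : realDomainType) (k : nat) (A : 'M[R]_k) : Prop :=
  forall i j, i != j -> 0 <= A i j.

Definition has_unstable_positive_feedback (R : realDomainType) (M E : nat)
    (s st : 'M[nat]_(M, E)) : Prop :=
  exists k (kappa : 'I_k -> 'I_M) (J : 'I_k -> 'I_E),
    is_CS s kappa J /\
    unstable_positive_feedback (CS_matrix (stoich R s st) kappa J).

Definition autocatalytic (R : realDomainType) (M E : nat)
    (s st : 'M[nat]_(M, E)) : Prop :=
  exists k (kappa : 'I_k -> 'I_M) (J : 'I_k -> 'I_E),
    is_CS s kappa J /\
    unstable_positive_feedback (CS_matrix (stoich R s st) kappa J) /\
    Metzler (CS_matrix (stoich R s st) kappa J).

(* symbolic reactivity matrix evaluated at the symbol values rho *)
Definition reactivity (R : nzRingType) (M E : nat) (s : 'M[nat]_(M, E))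
    (rho : 'I_E -> 'I_M -> R) : 'M[R]_(E, M) :=
  \matrix_(j, m) (if reactant s m j then rho j m else 0).

Definition principal_minor_sum (R : comNzRingType) (M : nat) (G : 'M[R]_M) (k : nat)
  : R :=
  \sum_(A : {set 'I_M} | #|A| == k)
     \det (\matrix_(i < #|A|, j < #|A|) G (enum_val i) (enum_val j)).

(* n = dim ker S^T, computed as the rank of the (row) left kernel of S *)
Definition dim_ker_ST (R : fieldType) (M E : nat) (S : 'M[R]_(M, E)) : nat :=
  \rank (kermx S).

Definition a_Mn (R : fieldType) (M E : nat) (s st : 'M[nat]_(M, E))
    (rho : 'I_E -> 'I_M -> R) : R :=
  let S := stoich R s st in
  principal_minor_sum (S *m reactivity s rho) (M - dim_ker_ST S).

(* capacity for differentiation of a two-cell network, the cell swap being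
   given by swS on species and swE on reactions *)
Definition capacity_for_differentiation (R : realFieldType) (M E : nat)
    (s st : 'M[nat]_(M, E)) (swS : 'I_M -> 'I_M) (swE : 'I_E -> 'I_E) : Prop :=
  exists rho : 'I_E -> 'I_M -> R,
    (forall j m, reactant s m j -> 0 < rho j m) /\
    (forall j m, reactant s m j -> rho (swE j) (swS m) = rho j m) /\
    a_Mn s st rho = 0.

Definition mono_chem1 (R : realType) (r : R -> R) : Prop :=
  [/\ forall a, 0 <= a -> 0 <= r a,
      forall a, 0 <= a -> (0 < r a <-> 0 < a) &
      forall a, 0 < a -> derivable r a 1 /\ 0 < 'D_1 r a].

Definition mono_chem2 (R : realType) (r : R -> R -> R) : Prop :=
  [/\ forall a b, 0 <= a -> 0 <= b -> 0 <= r a b,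
      forall a b, 0 <= a -> 0 <= b -> (0 < r a b <-> 0 < a /\ 0 < b),
      forall a b, 0 < a -> 0 < b ->
        derivable (fun u => r u b) a 1 /\ 0 < 'D_1 (fun u => r u b) a &
      forall a b, 0 < a -> 0 < b ->
        derivable (fun v => r a v) b 1 /\ 0 < 'D_1 (fun v => r a v) b].

(* species: 0 NE1, 1 NI1, 2 N1, 3 D1, 4 T1, 5 NE2, 6 NI2, 7 N2, 8 D2, 9 T2
   reactions: 0 = 11, 1 = 12, 2 = 13, 3 = 21, 4 = 22, 5 = 23 *)
Definition NE1 : 'I_10 := @Ordinal 10 0 isT.
Definition NI1 : 'I_10 := @Ordinal 10 1 isT.
Definition N1  : 'I_10 := @Ordinal 10 2 isT.
Definition D1  : 'I_10 := @Ordinal 10 3 isT.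
Definition T1  : 'I_10 := @Ordinal 10 4 isT.
Definition NE2 : 'I_10 := @Ordinal 10 5 isT.
Definition NI2 : 'I_10 := @Ordinal 10 6 isT.
Definition N2  : 'I_10 := @Ordinal 10 7 isT.
Definition D2  : 'I_10 := @Ordinal 10 8 isT.
Definition T2  : 'I_10 := @Ordinal 10 9 isT.

(* (species, reaction) pairs with coefficient 1 (all others are 0) *)
Definition BI_reactant_pairs : seq (nat * nat) :=
  [:: (1, 0); (0, 0);   (* 11: NI1 + NE1 -> N1 *)
      (2, 1); (8, 1);   (* 12: N1 + D2 -> NI1 + T2 *)
      (4, 2);           (* 13: T1 -> NE1 + D1 *)
      (6, 3); (5, 3);   (* 21: NI2 + NE2 -> N2 *)
      (7, 4); (3, 4);   (* 22: N2 + D1 -> NI2 + T1 *)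
      (9, 5)]%N.        (* 23: T2 -> NE2 + D2 *)
Definition BI_product_pairs : seq (nat * nat) :=
  [:: (2, 0);
      (1, 1); (9, 1);
      (0, 2); (3, 2);
      (7, 3);
      (6, 4); (4, 4);
      (5, 5); (8, 5)]%N.

Definition s_BI : 'M[nat]_(10, 6) :=
  \matrix_(m, j) (nat_of_bool (((m : nat), (j : nat)) \in BI_reactant_pairs)).
Definition st_BI : 'M[nat]_(10, 6) :=
  \matrix_(m, j) (nat_of_bool (((m : nat), (j : nat)) \in BI_product_pairs)).

Definition S_BI (R : nzRingType) : 'M[R]_(10, 6) := stoich R s_BI st_BI.

Definition BI_rates (R : realType) (r11 r12 : R -> R -> R) (r13 : R -> R)
    (r21 r22 : R -> R -> R) (r23 : R -> R) (x : 'cV[R]_10) : 'cV[R]_6 :=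
  \col_(j < 6) nth 0
    [:: r11 (x NI1 0) (x NE1 0); r12 (x N1 0) (x D2 0); r13 (x T1 0);
        r21 (x NI2 0) (x NE2 0); r22 (x N2 0) (x D1 0); r23 (x T2 0)] j.

Definition positive_vec (R : realDomainType) (M : nat) (x : 'cV[R]_M) : Prop :=
  forall i, 0 < x i 0.

Definition same_SCC (R : nzRingType) (M E : nat) (S : 'M[R]_(M, E)) (x y : 'cV[R]_M)
  : Prop := exists v : 'cV[R]_E, y - x = S *m v.

(* cell swap 1 <-> 2 *)
Definition swap_species_BI (i : 'I_10) : 'I_10 := inord ((i + 5) %% 10).
Definition swap_reactions_BI (j : 'I_6) : 'I_6 := inord ((j + 3) %% 6).

(* Main.v *)
Require Import Defs.
From HB Require Import structures.
From mathcomp Require Import all_boot all_order all_algebra.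
From mathcomp Require Import all_classical all_reals all_analysis.
From mathcomp Require Import lra zify.
Import Order.TTheory GRing.Theory Num.Theory.
Local Open Scope ring_scope.

Definition rx0 : 'I_6 := @Ordinal 6 0 isT.
Definition rx1 : 'I_6 := @Ordinal 6 1 isT.
Definition rx2 : 'I_6 := @Ordinal 6 2 isT.
Definition rx3 : 'I_6 := @Ordinal 6 3 isT.
Definition rx4 : 'I_6 := @Ordinal 6 4 isT.
Definition rx5 : 'I_6 := @Ordinal 6 5 isT.

Definition jr (m : 'I_10) : 'I_6 :=
  match val m with
  | 0 | 1 => rx0 | 2 | 8 => rx1 | 4 => rx2 | 5 | 6 => rx3 | 3 | 7 => rx4 | _ => rx5
  end%N.
Definition jp (m : 'I_10) : 'I_6 :=
  match val m with
  | 0 | 3 => rx2 | 1 | 9 => rx1 | 2 => rx0 | 4 | 6 => rx4 | 5 | 8 => rx5 | _ => rx3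
  end%N.

Lemma s_BI_E m j : s_BI m j = (j == jr m).
Proof.
rewrite /s_BI mxE; case: m => m Hm; case: j => j Hj.
do 10?[case: m Hm => [|m] Hm //]; do 6?[case: j Hj => [|j] Hj //].
Qed.

Lemma st_BI_E m j : st_BI m j = (j == jp m).
Proof.
rewrite /st_BI mxE; case: m => m Hm; case: j => j Hj.
do 10?[case: m Hm => [|m] Hm //]; do 6?[case: j Hj => [|j] Hj //].
Qed.

Lemma jr_jp m : jr m != jp m.
Proof. by case: m => m Hm; do 10?[case: m Hm => [|m] Hm //]. Qed.

Lemma S_BI_E (R : nzRingType) m j :
  S_BI R m j = if j == jr m then -1 else if j == jp m then 1 else 0.
Proof.
rewrite /S_BI /stoich mxE s_BI_E st_BI_E.
case E1: (j == jr m); case E2: (j == jp m) => /=.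
- by move: (jr_jp m); rewrite -(eqP E1) -(eqP E2) eqxx.
- by rewrite sub0r.
- by rewrite subr0.
- by rewrite subr0.
Qed.

Lemma reactant_BI m j : reactant s_BI m j = (j == jr m).
Proof. by rewrite /reactant s_BI_E; case: eqP. Qed.

Lemma SBI_mul (R : nzRingType) (v : 'cV[R]_6) i :
  (S_BI R *m v) i 0 = v (jp i) 0 - v (jr i) 0.
Proof.
rewrite mxE (bigD1 (jr i)) //= (bigD1 (jp i)) 1?eq_sym ?jr_jp //= big1.
  by rewrite !S_BI_E eqxx eq_sym (negbTE (jr_jp i)) eqxx addr0 mulN1r mul1r addrC.
move=> j /andP[H1 H2]; rewrite S_BI_E (negbTE H1) (negbTE H2) mul0r //.
Qed.

Lemma det_func (R : fieldType) k (M : 'M[R]_k) :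
  (forall i, M i i = 1) ->
  (forall i j, i != j -> M i j = 0 \/ M i j = -1) ->
  (forall i j j', i != j -> i != j' -> M i j != 0 -> M i j' != 0 -> j = j') ->
  \det M = 0 \/ \det M = 1.
Proof.
elim: k M => [|k IH] M H1 H2 H3; first by right; rewrite det_mx00.
case: (boolP [exists i, [forall j, (j != i) ==> (M i j == 0)]]).
- case/existsP => i /forallP Hi.
  rewrite (expand_det_row _ i) (bigD1 i) //= big1 ?addr0; last first.
    by move=> j Hj; rewrite (eqP (implyP (Hi j) Hj)) mul0r.
  rewrite H1 mul1r /cofactor addnn -signr_odd odd_double expr0 mul1r.
  apply: IH.
  + by move=> a; rewrite !mxE H1.
  + move=> a b ab; rewrite !mxE; apply: H2; by rewrite (inj_eq (@lift_inj _ i)).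
  + move=> a b b' ab ab'; rewrite !mxE => Hb Hb'; apply: (@lift_inj _ i).
    by apply: (H3 (lift i a)) => //; rewrite (inj_eq (@lift_inj _ i)).
- rewrite negb_exists => /forallP Hno; left; apply/eqP.
  rewrite -det_tr; apply/det0P; exists (const_mx 1).
  + apply/eqP => /matrixP /(_ 0 0); rewrite !mxE; apply/eqP; exact: oner_neq0.
  + apply/rowP => i; rewrite !mxE.
    have := Hno i; rewrite negb_forall => /existsP [j]; rewrite negb_imply => /andP[ji Mij].
    rewrite (bigD1 i) //= (bigD1 j) //= big1.
    * rewrite !mxE H1; case: (H2 i j); first by rewrite eq_sym.
        by move=> E; rewrite E eqxx in Mij.
      by move=> ->; rewrite !mul1r addr0 subrr.
    * move=> l /andP[li lj]; rewrite !mxE; case: (H2 i l); first by rewrite eq_sym.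
        by move=> ->; rewrite mulr0.
      move=> E; exfalso; move/negP: lj; apply; apply/eqP.
      apply: (H3 i) => //; try by rewrite eq_sym. by rewrite E oppr_eq0 oner_neq0.
Qed.

Lemma det_pot (R : fieldType) k (M : 'M[R]_k) (h : 'I_k -> nat) :
  (forall i, M i i = 1) ->
  (forall i j, i != j -> M i j != 0 -> (h j < h i)%N) ->
  \det M = 1.
Proof.
elim: k M h => [|k IH] M h H1 H2; first by rewrite det_mx00.
pose i := [arg min_(i < ord0) h i].
have Hi : forall j, j != i -> M i j = 0.
  move=> j ji; apply/eqP; apply: contraT => Mij.
  have := H2 i j; rewrite eq_sym => /(_ ji Mij).
  rewrite /i; case: arg_minnP => // i0 _ Hmin; by rewrite ltnNge Hmin.
rewrite (expand_det_row _ i) (bigD1 i) //= big1 ?addr0; last first.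
  by move=> j Hj; rewrite Hi // mul0r.
rewrite H1 mul1r /cofactor addnn -signr_odd odd_double expr0 mul1r.
apply: (IH _ (fun a => h (lift i a))).
+ by move=> a; rewrite !mxE H1.
+ move=> a b ab; rewrite !mxE; apply: H2; by rewrite (inj_eq (@lift_inj _ i)).
Qed.

Lemma CS_det (R : fieldType) k (a : 'I_k -> 'I_10) (b : 'I_k -> 'I_6) :
  injective b -> (forall i, b i = jr (a i)) ->
  let C := \matrix_(i, l) S_BI R (a i) (b l) in
  \det C = 0 \/ \det C = (-1) ^+ k.
Proof.
move=> binj Hb C.
have -> : C = (-1) *: (- C) by rewrite scaleN1r opprK.
rewrite detZ.
have [->|->] : \det (- C) = 0 \/ \det (- C) = 1; last 2 first.
- by left; rewrite mulr0.
- by right; rewrite mulr1.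
have CE : forall i l, (- C) i l = - S_BI R (a i) (b l) by move=> i l; rewrite 2!mxE.
apply: det_func.
- by move=> i; rewrite CE S_BI_E Hb eqxx opprK.
- move=> i j ij; rewrite CE S_BI_E -Hb (inj_eq binj) eq_sym (negbTE ij).
  by case: ifP => _; [right | left; rewrite oppr0].
- move=> i j j' ij ij'; rewrite !CE !S_BI_E -!Hb !(inj_eq binj) ![_ == i]eq_sym (negbTE ij) (negbTE ij').
  case: (b j =P jp (a i)) => [E1|_]; rewrite ?oppr0 ?eqxx //.
  case: (b j' =P jp (a i)) => [E2|_]; rewrite ?oppr0 ?eqxx //.
  by move=> _ _; apply: binj; rewrite E1 E2.
Qed.

Lemma sg_neq (R : realDomainType) k (x : R) : (0 < k)%N ->
  (x = 0 \/ x = (-1) ^+ k) -> Num.sg x <> (-1) ^+ k.-1.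
Proof.
case: k => // k _ [->|->]; rewrite ?sgr0 ?sgrX ?sgrN1 /=.
- rewrite -signr_odd; case: (odd k) => /=; lra.
- rewrite exprS -signr_odd; case: (odd k) => /=; lra.
Qed.

Lemma no_UPF (R : realType) : ~ has_unstable_positive_feedback R s_BI st_BI.
Proof.
move=> [k [kappa [J [[k0 kinj Jinj Hr] [Hsg _]]]]].
have HJ : forall i, J i = jr (kappa i) by move=> i; apply/eqP; rewrite -reactant_BI.
have := @CS_det R k kappa J Jinj HJ.
move=> /= H; exact: (@sg_neq R k _ k0 H Hsg).

Qed.

Lemma no_auto (R : realType) : ~ autocatalytic R s_BI st_BI.
Proof.
move=> [k [kappa [J [HCS [HU _]]]]]; apply: (@no_UPF R).
by exists k, kappa, J.
Qed.

Definition A0 : {set 'I_10} := [set m : 'I_10 | (val m \in [:: 0; 2; 3; 6; 9])%N].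

Lemma card_A0 : #|A0| = 5%N.
Proof. rewrite cardsE -sum1_card big_mkcond /= !big_ord_recl big_ord0 /=. by []. Qed.

Lemma A0_pot (m m' : 'I_10) : m \in A0 -> m' \in A0 -> m != m' ->
  (jr m' == jr m) || (jr m' == jp m) -> (m' < m)%N.
Proof.
rewrite !inE; case: m => m Hm; case: m' => m' Hm'.
do 10?[case: m Hm => [|m] Hm //]; do 10?[case: m' Hm' => [|m'] Hm' //].
Qed.

Lemma detA0 (R : fieldType) :
  \det (\matrix_(i < #|A0|, j < #|A0|) S_BI R (enum_val i) (jr (enum_val j))) = -1.
Proof.
set N := \matrix_(i < #|A0|, j < #|A0|) _.
have -> : N = (-1) *: (- N) by rewrite scaleN1r opprK.
have NE : forall i l, (- N) i l = - S_BI R (enum_val i) (jr (enum_val l))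
  by move=> i l; rewrite 2!mxE.
rewrite detZ (@det_pot _ _ _ (fun i => val (enum_val i))).
- by rewrite mulr1 card_A0 -signr_odd /= expr1.
- by move=> i; rewrite NE S_BI_E eqxx opprK.
- move=> i j ij; rewrite NE S_BI_E oppr_eq0 => H.
  apply: A0_pot; rewrite ?enum_valP //.
    by rewrite (inj_eq (@enum_val_inj _ _)).
  by move: H; case: ifP => // _; case: ifP => // _; rewrite eqxx.
Qed.



Lemma rank_S (R : fieldType) : \rank (S_BI R) = 5%N.
Proof.
apply/eqP; rewrite eqn_leq; apply/andP; split.
- have H0 : (S_BI R *m const_mx 1 : 'cV_10) = 0.
    by apply/colP => i; rewrite SBI_mul !mxE subrr.
  have H1 : (const_mx 1 : 'rV[R]_6) *m (S_BI R)^T = 0.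
    by have := congr1 trmx H0; rewrite trmx_mul trmx_const trmx0.
  have H2 : ((const_mx 1 : 'rV[R]_6) <= kermx (S_BI R)^T)%MS by apply/sub_kermxP.
  have := mxrankS H2; rewrite mxrank_ker mxrank_tr rank_rV.
  have -> : (const_mx 1 : 'rV[R]_6) != 0.
    by apply/eqP => /rowP /(_ 0); rewrite !mxE; apply/eqP; exact: oner_neq0.
  have := rank_leq_col (S_BI R); lia.
- pose N : 'M[R]_#|A0| := mxsub enum_val (fun j => jr (enum_val j)) (S_BI R).
  have UN : N \in unitmx.
    rewrite unitmxE unitfE; have -> : \det N = -1 by exact: detA0.
    by rewrite oppr_eq0 oner_neq0.
  apply: (@leq_trans (\rank N)); first by rewrite (mxrank_unit UN) card_A0.
  rewrite /N mxsubrc rowsubE; apply: leq_trans (mxrankM_maxr _ _) _.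
  have CS : forall n' (g : 'I_n' -> 'I_6),
      colsub g (S_BI R) = S_BI R *m colsub g 1%:M.
    by move=> n' g; rewrite mulmx_colsub mulmx1.
  rewrite CS; exact: mxrankM_maxl.
Qed.

Lemma dimker_S (R : fieldType) : dim_ker_ST (S_BI R) = 5%N.
Proof. by rewrite /dim_ker_ST mxrank_ker rank_S. Qed.

Lemma G_E (R : nzRingType) (rho : 'I_6 -> 'I_10 -> R) m m' :
  (S_BI R *m reactivity s_BI rho) m m' = S_BI R m (jr m') * rho (jr m') m'.
Proof.
rewrite [LHS]mxE (bigD1 (jr m')) //= big1 ?addr0.
  by rewrite [reactivity _ _ _ _]mxE reactant_BI eqxx.
by move=> j Hj; rewrite [reactivity _ _ _ _]mxE reactant_BI (negbTE Hj) mulr0.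
Qed.

Lemma G_fact (R : comNzRingType) k (e : 'I_k -> 'I_10) (rho : 'I_6 -> 'I_10 -> R) :
  \matrix_(i, j) (S_BI R *m reactivity s_BI rho) (e i) (e j) =
  (\matrix_(i, j) S_BI R (e i) (jr (e j))) *m diag_mx (\row_j rho (jr (e j)) (e j)).
Proof.
rewrite mul_mx_diag; apply/matrixP => i j.
by rewrite [LHS]mxE G_E !mxE.
Qed.

Lemma term_le0 (R : realType) (rho : 'I_6 -> 'I_10 -> R)
  (Hpos : forall j m, reactant s_BI m j -> 0 < rho j m) (A : {set 'I_10}) :
  #|A| = 5%N ->
  \det (\matrix_(i < #|A|, j < #|A|) (S_BI R *m reactivity s_BI rho)
          (enum_val i) (enum_val j)) <= 0.
Proof.
move=> hA; rewrite G_fact det_mulmx det_diag.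
have Hp : 0 < \prod_(i < #|A|) (\row_j rho (jr (enum_val j)) (enum_val j)) 0 i.
  by apply: prodr_gt0 => i _; rewrite mxE; apply: Hpos; rewrite reactant_BI.
set p := \prod_(i < _) _ in Hp *.
have E5 : (-1) ^+ #|A| = -1 :> R by rewrite hA -signr_odd /= expr1.
case: (boolP (injectiveb (fun j : 'I_#|A| => jr (enum_val j)))) => [/injectiveP Hinj|].
- have := @CS_det R #|A| enum_val (fun j => jr (enum_val j)) Hinj (fun i => erefl).
  move=> /= [->|->]; first by rewrite mul0r.
  by rewrite E5 mulN1r oppr_le0 ltW.
- move=> /injectivePn [i [j ij Eij]].
  rewrite -det_tr (determinant_alternate ij) ?mul0r //.
  by move=> l; rewrite !mxE /= Eij.
Qed.

Lemma term_A0 (R : realType) (rho : 'I_6 -> 'I_10 -> R)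
  (Hpos : forall j m, reactant s_BI m j -> 0 < rho j m) :
  \det (\matrix_(i < #|A0|, j < #|A0|) (S_BI R *m reactivity s_BI rho)
          (enum_val i) (enum_val j)) < 0.
Proof.
rewrite G_fact det_mulmx det_diag detA0 mulN1r oppr_lt0.
by apply: prodr_gt0 => i _; rewrite mxE; apply: Hpos; rewrite reactant_BI.
Qed.

Lemma no_cap (R : realType) :
  ~ capacity_for_differentiation R s_BI st_BI swap_species_BI swap_reactions_BI.
Proof.
move=> [rho [Hpos [_ Ha]]].
move: Ha; rewrite /a_Mn /= -/(S_BI R) dimker_S /principal_minor_sum.
rewrite (bigD1 A0) ?card_A0 //=.
have H1 := @term_A0 R rho Hpos.
have H2 : \sum_(A : {set 'I_10} | (#|A| == 5%N) && (A != A0))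
   \det (\matrix_(i < #|A|, j < #|A|) (S_BI R *m reactivity s_BI rho)
          (enum_val i) (enum_val j)) <= 0.
  by apply: sumr_le0 => A /andP[/eqP hA _]; exact: (@term_le0 R rho Hpos A hA).
move: H1 H2; lra.
Qed.

Lemma pos_incr (R : realType) (f : R -> R) :
  (forall a, 0 < a -> derivable f a 1 /\ 0 < 'D_1 f a) ->
  forall x y, 0 < x -> x < y -> f x < f y.
Proof.
move=> Hf x y x0 xy.
have y0 : 0 < y by apply: lt_trans xy.
apply: (@gtr0_derive1_lt_oo R f 0 (y + 1)).
- move=> z; rewrite in_itv /= => /andP[z0 _]; exact: (Hf z z0).1.
- move=> z; rewrite in_itv /= => /andP[z0 _]; rewrite derive1E; exact: (Hf z z0).2.
- move=> z; rewrite inE /= in_itv /= => /andP[z0 _].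
  apply: differentiable_continuous; apply/derivable1_diffP; exact: (Hf z z0).1.
all: try rewrite in_itv /= ?x0 ?y0 ?ltrDl ?ltr01 ?andbT /= //. by rewrite (lt_trans xy) // ltrDl. exact: xy. Qed.

Section Mono.
Context {R : realType}.

Lemma m1lt (r : R -> R) : mono_chem1 r -> forall a b, 0 < a -> a < b -> r a < r b.
Proof. by case=> _ _ H3; apply: pos_incr H3. Qed.

Lemma m1le (r : R -> R) : mono_chem1 r -> forall a b, 0 < a -> a <= b -> r a <= r b.
Proof.
move=> H a b a0; rewrite le_eqVlt => /orP[/eqP->//|ab]; exact: ltW (m1lt _ H _ _ a0 ab).
Qed.

Lemma m2l_lt (r : R -> R -> R) : mono_chem2 r ->
  forall a a' b, 0 < b -> 0 < a -> a < a' -> r a b < r a' b.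
Proof.
case=> _ _ H3 _ a a' b b0; apply: (@pos_incr R (fun u => r u b)).
by move=> u u0; apply: H3.
Qed.

Lemma m2l_le (r : R -> R -> R) : mono_chem2 r ->
  forall a a' b, 0 < b -> 0 < a -> a <= a' -> r a b <= r a' b.
Proof.
move=> H a a' b b0 a0; rewrite le_eqVlt => /orP[/eqP->//|ab]; exact: ltW (m2l_lt _ H _ _ _ b0 a0 ab).
Qed.

Lemma m2r_lt (r : R -> R -> R) : mono_chem2 r ->
  forall a b b', 0 < a -> 0 < b -> b < b' -> r a b < r a b'.
Proof.
case=> _ _ _ H4 a b b' a0; apply: (@pos_incr R (fun v => r a v)).
by move=> v v0; apply: H4.
Qed.

Lemma m2r_le (r : R -> R -> R) : mono_chem2 r ->
  forall a b b', 0 < a -> 0 < b -> b <= b' -> r a b <= r a b'.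
Proof.
move=> H a b b' a0 b0; rewrite le_eqVlt => /orP[/eqP->//|ab]; exact: ltW (m2r_lt _ H _ _ _ a0 b0 ab).
Qed.

Lemma inj_lt (f : R -> R) a b : (a < b -> f a < f b) -> (b < a -> f b < f a) ->
  f a = f b -> a = b.
Proof.
move=> H1 H2 E; case: (ltgtP a b) => // h; [have := H1 h | have := H2 h]; by rewrite E ltxx.
Qed.

End Mono.
Arguments m1lt {R r} _ {a b}.
Arguments m1le {R r} _ {a b}.
Arguments m2l_lt {R r} _ {a a' b}.
Arguments m2l_le {R r} _ {a a' b}.
Arguments m2r_lt {R r} _ {a b b'}.
Arguments m2r_le {R r} _ {a b b'}.

Definition ss (R : realType) (r11 r12 : R -> R -> R) (r13 : R -> R)
    (r21 r22 : R -> R -> R) (r23 : R -> R) (x : 'cV[R]_10) (c : R) : Prop :=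
  [/\ r11 (x NI1 0) (x NE1 0) = c, r12 (x N1 0) (x D2 0) = c, r13 (x T1 0) = c,
      r21 (x NI2 0) (x NE2 0) = c & (r22 (x N2 0) (x D1 0) = c /\ r23 (x T2 0) = c)].

Definition consv (R : realType) (x y : 'cV[R]_10) : Prop :=
  [/\ x NI1 0 + x N1 0 = y NI1 0 + y N1 0, x D1 0 + x T1 0 = y D1 0 + y T1 0,
      x NI2 0 + x N2 0 = y NI2 0 + y N2 0, x D2 0 + x T2 0 = y D2 0 + y T2 0 &
      x NE1 0 + x N1 0 + x T2 0 + x NE2 0 + x N2 0 + x T1 0 =
      y NE1 0 + y N1 0 + y T2 0 + y NE2 0 + y N2 0 + y T1 0].

Arguments ss {R}.
Arguments consv {R}.

Lemma consv_sym (R : realType) (x y : 'cV[R]_10) : consv x y -> consv y x.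
Proof. by case=> *; split; lra. Qed.

Lemma key_lt (R : realType) (r11 r12 : R -> R -> R) (r13 : R -> R)
    (r21 r22 : R -> R -> R) (r23 : R -> R) :
  mono_chem2 r11 -> mono_chem2 r12 -> mono_chem1 r13 ->
  mono_chem2 r21 -> mono_chem2 r22 -> mono_chem1 r23 ->
  forall x y c c', positive_vec x -> positive_vec y ->
  ss r11 r12 r13 r21 r22 r23 x c -> ss r11 r12 r13 r21 r22 r23 y c' ->
  consv x y -> c < c' -> False.
Proof.
move=> H11 H12 H13 H21 H22 H23 x y c c' px py [a1 a2 a3 a4 [a5 a6]]
  [b1 b2 b3 b4 [b5 b6]] [e1 e2 e3 e4 e5] cc.
have t1 : x T1 0 < y T1 0.
  rewrite ltNge; apply/negP => h; have := m1le H13 (py T1) h; lra.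
have t2 : x T2 0 < y T2 0.
  rewrite ltNge; apply/negP => h; have := m1le H23 (py T2) h; lra.
have n1 : x N1 0 < y N1 0.
  rewrite ltNge; apply/negP => h.
  have h1 := m2l_le H12 (py D2) (py N1) h.
  have h2 := m2r_lt H12 (px N1) (py D2) (_ : y D2 0 < x D2 0).
  have : y D2 0 < x D2 0 by lra.
  move/h2; lra.
have ne1 : x NE1 0 < y NE1 0.
  rewrite ltNge; apply/negP => h.
  have h1 := m2l_lt H11 (py NE1) (py NI1) (_ : y NI1 0 < x NI1 0).
  have h2 := m2r_le H11 (px NI1) (py NE1) h.
  have : y NI1 0 < x NI1 0 by lra.
  move/h1; lra.
have n2 : x N2 0 < y N2 0.
  rewrite ltNge; apply/negP => h.
  have h1 := m2l_le H22 (py D1) (py N2) h.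
  have h2 := m2r_lt H22 (px N2) (py D1) (_ : y D1 0 < x D1 0).
  have : y D1 0 < x D1 0 by lra.
  move/h2; lra.
have ne2 : x NE2 0 < y NE2 0.
  rewrite ltNge; apply/negP => h.
  have h1 := m2l_lt H21 (py NE2) (py NI2) (_ : y NI2 0 < x NI2 0).
  have h2 := m2r_le H21 (px NI2) (py NE2) h.
  have : y NI2 0 < x NI2 0 by lra.
  move/h1; lra.
lra.
Qed.

Lemma ord10_ind (P : 'I_10 -> Prop) :
  P NE1 -> P NI1 -> P N1 -> P D1 -> P T1 -> P NE2 -> P NI2 -> P N2 -> P D2 -> P T2 ->
  forall i, P i.
Proof.
move=> p0 p1 p2 p3 p4 p5 p6 p7 p8 p9 [i Hi].
do 10?[case: i Hi => [|i] Hi; first by [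
  have -> : Ordinal Hi = NE1 by apply: val_inj |
  have -> : Ordinal Hi = NI1 by apply: val_inj |
  have -> : Ordinal Hi = N1 by apply: val_inj |
  have -> : Ordinal Hi = D1 by apply: val_inj |
  have -> : Ordinal Hi = T1 by apply: val_inj |
  have -> : Ordinal Hi = NE2 by apply: val_inj |
  have -> : Ordinal Hi = NI2 by apply: val_inj |
  have -> : Ordinal Hi = N2 by apply: val_inj |
  have -> : Ordinal Hi = D2 by apply: val_inj |
  have -> : Ordinal Hi = T2 by apply: val_inj ]].
by [].
Qed.

Lemma key_eq (R : realType) (r11 r12 : R -> R -> R) (r13 : R -> R)
    (r21 r22 : R -> R -> R) (r23 : R -> R) :
  mono_chem2 r11 -> mono_chem2 r12 -> mono_chem1 r13 ->
  mono_chem2 r21 -> mono_chem2 r22 -> mono_chem1 r23 ->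
  forall x y c, positive_vec x -> positive_vec y ->
  ss r11 r12 r13 r21 r22 r23 x c -> ss r11 r12 r13 r21 r22 r23 y c ->
  consv x y -> x = y.
Proof.
move=> H11 H12 H13 H21 H22 H23 x y c px py [a1 a2 a3 a4 [a5 a6]]
  [b1 b2 b3 b4 [b5 b6]] [e1 e2 e3 e4 e5].
have t1 : x T1 0 = y T1 0.
  apply: (@inj_lt R r13); [apply: (m1lt H13 (px T1)) | apply: (m1lt H13 (py T1)) | lra].
have t2 : x T2 0 = y T2 0.
  apply: (@inj_lt R r23); [apply: (m1lt H23 (px T2)) | apply: (m1lt H23 (py T2)) | lra].
have d1 : x D1 0 = y D1 0 by lra.
have d2 : x D2 0 = y D2 0 by lra.
have n1 : x N1 0 = y N1 0.
  apply: (@inj_lt R (fun u => r12 u (x D2 0))).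
  - apply: (m2l_lt H12 (px D2) (px N1)).
  - apply: (m2l_lt H12 (px D2) (py N1)).
  - by rewrite /= a2 d2 b2.
have ni1 : x NI1 0 = y NI1 0 by lra.
have ne1 : x NE1 0 = y NE1 0.
  apply: (@inj_lt R (fun u => r11 (x NI1 0) u)).
  - apply: (m2r_lt H11 (px NI1) (px NE1)).
  - apply: (m2r_lt H11 (px NI1) (py NE1)).
  - by rewrite /= a1 ni1 b1.
have n2 : x N2 0 = y N2 0.
  apply: (@inj_lt R (fun u => r22 u (x D1 0))).
  - apply: (m2l_lt H22 (px D1) (px N2)).
  - apply: (m2l_lt H22 (px D1) (py N2)).
  - by rewrite /= a5 d1 b5.
have ni2 : x NI2 0 = y NI2 0 by lra.
have ne2 : x NE2 0 = y NE2 0.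
  apply: (@inj_lt R (fun u => r21 (x NI2 0) u)).
  - apply: (m2r_lt H21 (px NI2) (px NE2)).
  - apply: (m2r_lt H21 (px NI2) (py NE2)).
  - by rewrite /= a4 ni2 b4.
apply/matrixP => i j; rewrite [j]ord1; move: i.
by apply: ord10_ind.
Qed.

Lemma ss_of (R : realType) (r11 r12 : R -> R -> R) (r13 : R -> R)
    (r21 r22 : R -> R -> R) (r23 : R -> R) (x : 'cV[R]_10) :
  S_BI R *m BI_rates r11 r12 r13 r21 r22 r23 x = 0 ->
  ss r11 r12 r13 r21 r22 r23 x (r11 (x NI1 0) (x NE1 0)).
Proof.
move=> H.
have E i : BI_rates r11 r12 r13 r21 r22 r23 x (jp i) 0 =
           BI_rates r11 r12 r13 r21 r22 r23 x (jr i) 0.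
  by apply/eqP; rewrite -subr_eq0 -SBI_mul H mxE.
have e0 := E NE1; have e1 := E NI1; have e3 := E D1.
have e5 := E NE2; have e6 := E NI2; have e8 := E D2.
rewrite /BI_rates !mxE /= in e0 e1 e3 e5 e6 e8.
by split; [| lra | lra | lra | split; lra].
Qed.

Lemma consv_of (R : realType) (x y : 'cV[R]_10) :
  same_SCC (S_BI R) x y -> consv x y.
Proof.
move=> [v Hv].
have E i : y i 0 - x i 0 = v (jp i) 0 - v (jr i) 0.
  by rewrite -SBI_mul -Hv !mxE.
have := E NE1; have := E NI1; have := E N1; have := E D1; have := E T1.
have := E NE2; have := E NI2; have := E N2; have := E D2; have := E T2.
rewrite /=.
move=> *; split; lra.
Qed.

Lemma part1 (R : realType) :
  (forall (r11 r12 : R -> R -> R) (r13 : R -> R)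
          (r21 r22 : R -> R -> R) (r23 : R -> R),
     mono_chem2 r11 -> mono_chem2 r12 -> mono_chem1 r13 ->
     mono_chem2 r21 -> mono_chem2 r22 -> mono_chem1 r23 ->
     forall x y : 'cV[R]_10,
       positive_vec x -> S_BI R *m BI_rates r11 r12 r13 r21 r22 r23 x = 0 ->
       positive_vec y -> S_BI R *m BI_rates r11 r12 r13 r21 r22 r23 y = 0 ->
       same_SCC (S_BI R) x y -> x = y).
Proof.
move=> r11 r12 r13 r21 r22 r23 H11 H12 H13 H21 H22 H23 x y px Hx py Hy Hs.
have sx := @ss_of R _ _ _ _ _ _ x Hx; have sy := @ss_of R _ _ _ _ _ _ y Hy.
have cxy := @consv_of R x y Hs.
case: (ltgtP (r11 (x NI1 0) (x NE1 0)) (r11 (y NI1 0) (y NE1 0))) => h.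
- by exfalso; apply: (@key_lt R _ _ _ _ _ _ H11 H12 H13 H21 H22 H23 x y _ _ px py sx sy cxy h).
- by exfalso; apply: (@key_lt R _ _ _ _ _ _ H11 H12 H13 H21 H22 H23 y x _ _ py px sy sx (@consv_sym R x y cxy) h).
- rewrite h in sx; exact: (@key_eq R _ _ _ _ _ _ H11 H12 H13 H21 H22 H23 x y _ px py sx sy cxy).
Qed.

Theorem theorem3p1 (R : realType) :
  (forall (r11 r12 : R -> R -> R) (r13 : R -> R)
          (r21 r22 : R -> R -> R) (r23 : R -> R),
     mono_chem2 r11 -> mono_chem2 r12 -> mono_chem1 r13 ->
     mono_chem2 r21 -> mono_chem2 r22 -> mono_chem1 r23 ->
     forall x y : 'cV[R]_10,
       positive_vec x -> S_BI R *m BI_rates r11 r12 r13 r21 r22 r23 x = 0 ->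
       positive_vec y -> S_BI R *m BI_rates r11 r12 r13 r21 r22 r23 y = 0 ->
       same_SCC (S_BI R) x y -> x = y)
  /\ ~ autocatalytic R s_BI st_BI
  /\ ~ has_unstable_positive_feedback R s_BI st_BI
  /\ ~ capacity_for_differentiation R s_BI st_BI swap_species_BI swap_reactions_BI.
Proof.
split; first exact: part1.
split; first exact: no_auto.
split; first exact: no_UPF.
exact: no_cap.
Qed.
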